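(* Let $x=(x_1,\ldots,x_n)$ and $y=(y_1,\ldots,y_m)$ be observed samples, let $\mathbb{P}^{x,y}$ be the posterior distribution of the pair $(P_1,P_2)$ given $\mathcal{D}_{n,m}=\{x,y\}$. Let $d$ be a distance between probability measures, $M=\sup_{P_1,P_2} d(P_1,P_2)\in(0,\infty]$, let $w:[0,M)\to(0,\infty]$ be a probability density function on $[0,M)$ and $W(t)=\int_0^t w(\varepsilon)\,d\varepsilon$. Define $\mathrm{WIKS}(\mathcal{D}_{n,m})=\int_0^M w(\varepsilon)\,\mathbb{P}^{x,y}(d(P_1,P_2)>\varepsilon)\,d\varepsilon$. Then: (a) $0\le \mathrm{WIKS}(\mathcal{D}_{n,m})\le 1$ for every observed sample $\mathcal{D}_{n,m}$; (b) $\mathrm{WIKS}(\mathcal{D}_{n,m})=0$ if and only if $d(P_1,P_2)=0$ $\mathbb{P}^{x,y}$-almost surely; (c) $\mathrm{WIKS}(\mathcal{D}_{n,m})=1$ if and only if $d(P_1,P_2)=M$ $\mathbb{P}^{x,y}$-almost surely; (d) WIKS is increasing with respect to $d(P_1,P_2)$: if $\mathcal{D}$ and $\mathcal{D}'$ are two observed data sets such that the posterior distribution of $d(P_1,P_2)$ given $\mathcal{D}'$ is stochastically greater than that given $\mathcal{D}$, i.e. $\mathbb{P}^{\mathcal{D}}(d(P_1,P_2)\ge t)\le \mathbb{P}^{\mathcal{D}'}(d(P_1,P_2)\ge t)$ for all $t>0$, then $\mathrm{WIKS}(\mathcal{D})\le \mathrm{WIKS}(\mathcal{D}')$.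
   Context: Bayesian two-sample setting: $(P_1,P_2)$ is a random pair of probability distributions with some prior; conditionally on $(P_1,P_2)$, $x_1,\ldots,x_n$ are i.i.d. from $P_1$ and $y_1,\ldots,y_m$ are i.i.d. from $P_2$, independently. $\mathbb{P}^{\mathcal{D}}$ denotes the posterior given data $\mathcal{D}$. *)

(* Defs.v *)
From HB Require Import structures.
From mathcomp Require Import all_boot all_order all_algebra.
From mathcomp Require Import all_classical all_reals all_analysis.
From mathcomp Require Import measurable_realfun.
Set Implicit Arguments. Unset Strict Implicit. Unset Printing Implicit Defensive.
Import Order.TTheory GRing.Theory Num.Theory.
Local Open Scope classical_set_scope.
Local Open Scope ring_scope.
Local Open Scope ereal_scope.

(* Space of probability distributions on the observation space S, with the
   standard sigma-algebra generated by the evaluation maps (pprobability). *)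
Definition Dist {dS : measure_display} (S : measurableType dS) (R : realType) :=
  pprobability S R.

Definition is_distance {T : Type} {R : realType} (d : T -> T -> R) : Prop :=
  [/\ forall P Q, (0 <= d P Q)%R,
      forall P Q, d P Q = 0%R <-> P = Q,
      forall P Q, d P Q = d Q P &
      forall P Q U, (d P U <= d P Q + d Q U)%R].

Definition supdist {T : Type} {R : realType} (d : T -> T -> R) : \bar R :=
  ereal_sup (range (fun PQ : T * T => (d PQ.1 PQ.2)%:E)).

Definition intM {R : realType} (M : \bar R) : set R :=
  [set e : R | (0 <= e)%R /\ e%:E < M].

Definition is_density_on {R : realType} (M : \bar R) (w : R -> \bar R) : Prop :=
  [/\ measurable_fun (intM M : set R) (w : R -> \bar R),
      forall e, intM M e -> 0 < w e &
      \int[lebesgue_measure]_(e in intM M) w e = 1].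

Definition Wcdf {R : realType} (w : R -> \bar R) (t : R) : \bar R :=
  \int[lebesgue_measure]_(e in `[0%R, t]) w e.

Definition WIKS {dS : measure_display} {S : measurableType dS} {R : realType}
  (d : Dist S R -> Dist S R -> R) (w : R -> \bar R)
  (post : probability (Dist S R * Dist S R)%type R) : \bar R :=
  \int[lebesgue_measure]_(e in intM (supdist d))
     (w e * post [set PQ | (e < d PQ.1 PQ.2)%R]).

(* Main.v *)
Require Import Defs.
From HB Require Import structures.
From mathcomp Require Import all_boot all_order all_algebra.
From mathcomp Require Import all_classical all_reals all_analysis.
From mathcomp Require Import measurable_realfun.
From mathcomp Require Import lra.
Import Order.TTheory GRing.Theory Num.Theory.
Local Open Scope classical_set_scope.
Local Open Scope ring_scope.
Local Open Scope ereal_scope.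

Section Gen.
Context (R : realType) (d0 : measure_display) (T : measurableType d0).
Variable f : T -> R.
Hypothesis mf : measurable_fun setT f.

Lemma mgt (e : R) : measurable [set x | (e < f x)%R].
Proof.
have := mf measurableT _ (measurable_itv `]e, +oo[).
rewrite setTI; congr measurable; apply/seteqP; split => x /=;
  by rewrite in_itv /= andbT.
Qed.

Lemma mge (e : R) : measurable [set x | (e <= f x)%R].
Proof.
have := mf measurableT _ (measurable_itv `[e, +oo[).
rewrite setTI; congr measurable; apply/seteqP; split => x /=;
  by rewrite in_itv /= andbT.
Qed.

Variable P : probability T R.

Lemma G_mono (a b : R) : (a <= b)%R ->
  P [set x | (b < f x)%R] <= P [set x | (a < f x)%R].
Proof.
move=> ab; apply: le_measure; rewrite ?inE; try exact: mgt.
by move=> x /= bx; exact: le_lt_trans bx.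
Qed.

Lemma H_mono (a b : R) : (a <= b)%R ->
  P (~` [set x | (a < f x)%R]) <= P (~` [set x | (b < f x)%R]).
Proof.
move=> ab; apply: le_measure; rewrite ?inE; try exact/measurableC/mgt.
by move=> x /= ax bx; apply: ax; exact: le_lt_trans bx.
Qed.

Lemma mG (D : set R) : measurable D ->
  measurable_fun D (fun e => P [set x | (e < f x)%R]).
Proof.
move=> mD.
have -> : (fun e => P [set x | (e < f x)%R]) =
   EFin \o (fun e => fine (P [set x | (e < f x)%R])).
  by apply/funext => e /=; rewrite fineK // fin_num_measure //; exact: mgt.
apply: measurableT_comp => //.
apply: nonincreasing_measurable => // a b ab.
apply: fine_le; rewrite ?fin_num_measure //; try exact: mgt.
exact: G_mono.
Qed.

Lemma mH (D : set R) : measurable D ->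
  measurable_fun D (fun e => P (~` [set x | (e < f x)%R])).
Proof.
move=> mD.
have -> : (fun e => P (~` [set x | (e < f x)%R])) =
   EFin \o (fun e => fine (P (~` [set x | (e < f x)%R]))).
  by apply/funext => e /=; rewrite fineK // fin_num_measure //; exact/measurableC/mgt.
apply: measurableT_comp => //.
apply: nondecreasing_measurable => // a b ab.
apply: fine_le; rewrite ?fin_num_measure //; try exact/measurableC/mgt.
exact: H_mono.
Qed.

End Gen.
Arguments mgt {R d0 T f} mf e.
Arguments mge {R d0 T f} mf e.
Arguments mG {R d0 T f} mf P {D}.
Arguments mH {R d0 T f} mf P {D}.

Lemma int0_point {R : realType} {D : set R} (mD : measurable D) {g : R -> \bar R} :
  measurable_fun D g -> (forall x, D x -> 0 <= g x) ->
  \int[lebesgue_measure]_(x in D) g x = 0 ->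
  forall a b : R, (a < b)%R -> [set` `[a, b]] `<=` D -> exists2 x, [set` `[a, b]] x & g x = 0.
Proof.
move=> mg g0 ig a b ab sD.
have : \int[lebesgue_measure]_(x in D) `|g x| = 0.
  by rewrite -ig; apply: eq_integral => x /set_mem Dx; rewrite gee0_abs // g0.
move/(ae_eq_integral_abs lebesgue_measure mD mg) => -[N [mN N0 sN]].
apply: contrapT => hne.
have sab : [set` `[a, b]] `<=` N.
  move=> x abx; apply: sN => /= H; apply: hne; exists x => //; exact: H (sD _ abx).
have hm : lebesgue_measure [set` `[a, b]] <= lebesgue_measure N.
  by apply: le_measure => //; rewrite inE //; exact: measurable_itv.
move: hm; rewrite N0 lebesgue_measure_itv /= lte_fin ab -EFinD lee_fin subr_le0 leNgt ab.
by [].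
Qed.

Lemma mintM {R : realType} (M : \bar R) : measurable (intM M).
Proof.
case: M => [r| |].
- have -> : intM r%:E = [set` `[0%R, r[]; last exact: measurable_itv.
  rewrite predeqE => x /=; rewrite /intM in_itv /= lte_fin; split.
    by move=> [-> ->].
  by move/andP.
- have -> : intM +oo = [set` (`[0%R, +oo[ : interval R)]; last exact: measurable_itv.
  rewrite predeqE => x /=; rewrite /intM in_itv /= ?andbT; split.
    by move=> [->].
  by move=> ->; split => //; exact: ltry.
- have -> : intM -oo = set0 :> set R; last exact: measurable0.
  by rewrite predeqE => x /=; split => // -[_]; rewrite ltNge leNye.
Qed.

Lemma exists_above {R : realType} {M : \bar R} {e : R} :
  e%:E < M -> exists e' : R, (e < e')%R /\ e'%:E < M.
Proof.
case: M => [r| |] //.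
- rewrite lte_fin => er; exists ((e + r) / 2)%R; rewrite lte_fin; split; lra.
- by move=> _; exists (e + 1)%R; split; [lra|exact: ltry].
Qed.

Lemma cofinal {R : realType} {M : \bar R} : 0 < M ->
  exists u : nat -> R, (forall k, intM M (u k)) /\
    (forall e, intM M e -> exists k, (e <= u k)%R).
Proof.
case: M => [r| |] //.
- rewrite lte_fin => r0.
  exists (fun k => Num.max 0%R (r - k.+1%:R^-1)%R); split.
    move=> k; split; first by rewrite le_max lexx.
    rewrite lte_fin gt_max r0 /= ltrBlDr ltrDl invr_gt0 ltr0n //.
  move=> e [e0]; rewrite lte_fin => /ltr_add_invr [k hk]; exists k.
  rewrite le_max; apply/orP; right; rewrite lerBrDr; exact: ltW.
- move=> _; exists (fun k => k%:R); split.
    by move=> k; split => //; exact: ltry.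
  by move=> e _; exists (Num.truncn e).+1; exact: ltW (truncnS_gt e).
Qed.

Theorem theorem2 (dS : measure_display) (S : measurableType dS) (R : realType)
  (post : seq S -> seq S -> probability (Dist S R * Dist S R)%type R)
  (d : Dist S R -> Dist S R -> R) (w : R -> \bar R) :
  is_distance d ->
  measurable_fun [set: (Dist S R * Dist S R)%type] (fun PQ => d PQ.1 PQ.2) ->
  0 < supdist d ->
  is_density_on (supdist d) w ->
  (forall x y : seq S,
     0 <= WIKS d w (post x y) <= 1) /\
  (forall x y : seq S,
     WIKS d w (post x y) = 0 <->
     {ae post x y, forall PQ, d PQ.1 PQ.2 = 0%R}) /\
  (forall x y : seq S,
     WIKS d w (post x y) = 1 <->
     {ae post x y, forall PQ, (d PQ.1 PQ.2)%:E = supdist d}) /\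
  (forall x y x' y' : seq S,
     (forall t : R, (0 < t)%R ->
        post x y [set PQ | (t <= d PQ.1 PQ.2)%R]
        <= post x' y' [set PQ | (t <= d PQ.1 PQ.2)%R]) ->
     WIKS d w (post x y) <= WIKS d w (post x' y')).
Proof.
move=> [d0 dsep dsym dtri] md M0 [mw w0 w1].
have mI := mintM (supdist d).
have w0' : forall e, intM (supdist d) e -> 0 <= w e := fun e h => ltW (w0 e h).
have dleM : forall PQ : (Dist S R * Dist S R)%type, (d PQ.1 PQ.2)%:E <= supdist d.
  by move=> PQ; apply: ereal_sup_ubound; exists PQ.
have mWI : forall P : probability (Dist S R * Dist S R)%type R,
  measurable_fun (intM (supdist d))
    (fun e => w e * P [set PQ | (e < d PQ.1 PQ.2)%R]).
  by move=> P; apply: emeasurable_funM => //; exact: (mG md P mI).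
have WI0 : forall (P : probability (Dist S R * Dist S R)%type R) e,
    intM (supdist d) e -> 0 <= w e * P [set PQ | (e < d PQ.1 PQ.2)%R].
  by move=> P e De; apply: mule_ge0; [exact: w0'|exact: measure_ge0].
split.
  move=> x y; apply/andP; split.
    by apply: integral_ge0 => e De; exact: WI0.
  rewrite -w1; apply: ge0_le_integral => //.
  - by move=> e De; exact: WI0.
  - exact: mWI.
  - move=> e De; rewrite -[leRHS]mule1; apply: lee_wpmul2l; first exact: w0'.
    exact: probability_le1 (mgt md e).
split.
  move=> x y; split.
    move=> W0.
    have Gz : forall e, (0 < e)%R -> e%:E < supdist d ->
        post x y [set PQ | (e < d PQ.1 PQ.2)%R] = 0.
      move=> e e0 eM.
      have sub : [set` `[0%R, e]] `<=` intM (supdist d).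
        move=> z /=; rewrite in_itv /= => /andP[z0 ze]; split => //.
        by apply: le_lt_trans eM; rewrite lee_fin.
      have [z zab] := int0_point mI (mWI _) (WI0 _) W0 _ _ e0 sub.
      move: zab; rewrite /= in_itv /= => /andP[z0 ze].
      have zI : intM (supdist d) z by apply: sub; rewrite /= in_itv /= z0 ze.
      move/eqP; rewrite mule_eq0 => /orP[/eqP wz|/eqP Gz].
        by have := w0 z zI; rewrite wz ltxx.
      apply/eqP; rewrite eq_le measure_ge0 andbT -Gz; exact: G_mono.
    have [r [r0 rM]] := exists_above M0.
    apply: (negligibleS (A := \bigcup_k [set PQ | (Num.min r k.+1%:R^-1 < d PQ.1 PQ.2)%R])).
      move=> PQ /= dne.
      have dpos : (0 < d PQ.1 PQ.2)%R by rewrite lt_neqAle d0 andbT eq_sym; apply/eqP.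
      have [k hk] := ltr_add_invr dpos; exists k => //=.
      by apply: le_lt_trans hk; rewrite add0r ge_min lexx orbT.
    apply: negligible_bigcup => k; exists [set PQ | (Num.min r k.+1%:R^-1 < d PQ.1 PQ.2)%R].
    split => //; first exact: mgt md _.
    apply: Gz; first by rewrite lt_min r0 invr_gt0 ltr0n.
    by apply: le_lt_trans rM; rewrite lee_fin ge_min lexx.
  move=> [N [mN N0 sN]].
  rewrite /WIKS (eq_integral (cst 0)) ?integral0 // => e /set_mem [e0 eM].
  suff -> : post x y [set PQ | (e < d PQ.1 PQ.2)%R] = 0 by rewrite mule0.
  apply/eqP; rewrite eq_le measure_ge0 andbT -N0; apply: le_measure; rewrite ?inE //.
    exact: mgt md _.
  move=> PQ /= ed; apply: sN => /= h; move: ed; by rewrite h ltNge e0.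
split.
  move=> x y; split.
    move=> W1.
    have Hint : \int[lebesgue_measure]_(e in intM (supdist d))
        (w e * post x y (~` [set PQ | (e < d PQ.1 PQ.2)%R])) = 0.
      have h : \int[lebesgue_measure]_(e in intM (supdist d)) w e =
        \int[lebesgue_measure]_(e in intM (supdist d))
          (w e * post x y [set PQ | (e < d PQ.1 PQ.2)%R]) +
        \int[lebesgue_measure]_(e in intM (supdist d))
          (w e * post x y (~` [set PQ | (e < d PQ.1 PQ.2)%R])).
        rewrite -ge0_integralD //.
        - apply: eq_integral => e /set_mem De.
          rewrite -ge0_muleDr ?measure_ge0 // probability_setC; last exact: mgt md _.
          by rewrite addeC subeK ?mule1 // fin_num_measure //; exact: mgt md _.
        - exact: WI0.
        - exact: mWI.
        - by move=> e De; apply: mule_ge0; [exact: w0'|exact: measure_ge0].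
        - by apply: emeasurable_funM => //; exact: (mH md _ mI).
      have W1' : \int[lebesgue_measure]_(e in intM (supdist d))
          (w e * post x y [set PQ | (e < d PQ.1 PQ.2)%R]) = 1 := W1.
      move: h; rewrite w1 W1'.
      have : 0 <= \int[lebesgue_measure]_(e in intM (supdist d))
          (w e * post x y (~` [set PQ | (e < d PQ.1 PQ.2)%R])).
        by apply: integral_ge0 => e De; apply: mule_ge0; [exact: w0'|exact: measure_ge0].
      case: (\int[lebesgue_measure]_(e in intM (supdist d)) _) => [r| |] //.
      move=> _ /eqP; rewrite -EFinD eqe => /eqP h.
      by congr EFin; lra.
    have Hz : forall e, intM (supdist d) e ->
        post x y (~` [set PQ | (e < d PQ.1 PQ.2)%R]) = 0.
      move=> e [e0 eM].
      have [e' [ee' e'M]] := exists_above eM.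
      have sub : [set` `[e, e']] `<=` intM (supdist d).
        move=> z /=; rewrite in_itv /= => /andP[ez ze]; split; first exact: le_trans ez.
        by apply: le_lt_trans e'M; rewrite lee_fin.
      have [z zab] := int0_point mI (emeasurable_funM mw (mH md _ mI))
        (fun e De => mule_ge0 (w0' e De) (measure_ge0 _ _)) Hint _ _ ee' sub.
      move: zab; rewrite /= in_itv /= => /andP[ez ze].
      have zI : intM (supdist d) z by apply: sub; rewrite /= in_itv /= ez ze.
      move/eqP; rewrite mule_eq0 => /orP[/eqP wz|/eqP Hz].
        by have := w0 z zI; rewrite wz ltxx.
      apply/eqP; rewrite eq_le measure_ge0 andbT -Hz; exact: H_mono.
    have [u [uI uc]] := cofinal M0.
    apply: (negligibleS (A := \bigcup_k ~` [set PQ | (u k < d PQ.1 PQ.2)%R])).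
      move=> PQ /= dne.
      have dlt : (d PQ.1 PQ.2)%:E < supdist d.
        by rewrite lt_neqAle dleM andbT; apply/eqP.
      have [k hk] := uc _ (conj (d0 _ _) dlt); exists k => //=.
      by apply/negP; rewrite -leNgt.
    apply: negligible_bigcup => k; exists (~` [set PQ | (u k < d PQ.1 PQ.2)%R]).
    split => //; first by apply: measurableC; exact: (mgt md).
    exact: Hz.
  move=> [N [mN N0 sN]].
  rewrite /WIKS -w1; apply: eq_integral => e /set_mem [e0 eM].
  suff -> : post x y [set PQ | (e < d PQ.1 PQ.2)%R] = 1 by rewrite mule1.
  apply/eqP; rewrite eq_le probability_le1 /=; last exact: mgt md _.
  have : post x y (~` N) <= post x y [set PQ | (e < d PQ.1 PQ.2)%R].
    apply: le_measure; rewrite ?inE //; first exact: measurableC.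
      exact: mgt md _.
    move=> PQ /= nN; apply: contrapT => h; apply: nN; apply: sN => /= hd.
    by apply: h; rewrite -lte_fin hd.
  by rewrite probability_setC // N0 sube0.
move=> x y x' y' Hle.
rewrite /WIKS; apply: ge0_le_integral => //.
- exact: WI0.
- exact: mWI.
- exact: mWI.
move=> e [e0 eM]; apply: lee_wpmul2l; first exact: w0'.
pose Fk := fun k : nat => [set PQ : (Dist S R * Dist S R)%type |
  (e + k.+1%:R^-1 <= d PQ.1 PQ.2)%R].
have UF : \bigcup_k Fk k = [set PQ | (e < d PQ.1 PQ.2)%R].
  apply/seteqP; split => PQ /=.
    move=> [k _ /= h]; apply: lt_le_trans h; by rewrite ltrDl invr_gt0 ltr0n.
  move=> /ltr_add_invr [k hk]; exists k => //; exact: ltW.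
have mF : forall k, measurable (Fk k) by move=> k; exact: mge md _.
have ndF : {homo Fk : n m / (n <= m)%N >-> (n <= m)%O}.
  move=> n m nm; apply/subsetPset => PQ /= h; apply: le_trans h.
  by rewrite lerD2l lef_pV2 ?posrE // ler_nat.
have c1 := @nondecreasing_cvg_mu _ _ _ (post x y) Fk mF (bigcupT_measurable Fk mF) ndF.
have c2 := @nondecreasing_cvg_mu _ _ _ (post x' y') Fk mF (bigcupT_measurable Fk mF) ndF.
rewrite -UF -(cvg_lim (@ereal_hausdorff R) c1) -(cvg_lim (@ereal_hausdorff R) c2).
apply: lee_lim.
- by apply/cvg_ex; eexists; exact: c1.
- by apply/cvg_ex; eexists; exact: c2.
apply: nearW => k; apply: Hle.
by rewrite ltr_wpDl // invr_gt0 ltr0n.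
Qed.
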